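(* Let $\boldsymbol{u}^\star\in\mathbb{R}^n$ and $f(\boldsymbol{u})=\frac12\|\boldsymbol{u}\boldsymbol{u}^{\mathrm T}-\boldsymbol{u}^\star{\boldsymbol{u}^\star}^{\mathrm T}\|_1$ on $\mathbb{R}^n$. Then every second-order stationary point of $f$ is a global minimizer of $f$.
   Context: $\|\cdot\|_1$ is the entrywise $\ell_1$-norm. $\partial f$ denotes the subdifferential (Fréchet, limiting and Clarke subdifferentials coincide for this $f$). The second subderivative is $d^2f(\boldsymbol{x};\boldsymbol{v})(\boldsymbol{w})=\liminf_{t\searrow0,\ \boldsymbol{w}'\to\boldsymbol{w}}\frac{f(\boldsymbol{x}+t\boldsymbol{w}')-f(\boldsymbol{x})-t\,\boldsymbol{v}^{\mathrm T}\boldsymbol{w}'}{t^2/2}$. A point $\boldsymbol{x}$ is a second-order stationary point of $f$ if $\boldsymbol{0}\in\partial f(\boldsymbol{x})$ and $d^2f(\boldsymbol{x};\boldsymbol{0})(\boldsymbol{w})\ge0$ for all $\boldsymbol{w}\in\mathbb{R}^n$. *)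

(* Defs.v *)
From HB Require Import structures.
From mathcomp Require Import all_boot all_order all_algebra.
From mathcomp Require Import all_classical all_reals ereal.
Set Implicit Arguments. Unset Strict Implicit. Unset Printing Implicit Defensive.
Import Order.TTheory GRing.Theory Num.Theory.
Local Open Scope classical_set_scope.
Local Open Scope ring_scope.

Section Defs.
Variables (R : realType) (n : nat).
Local Notation vec := ('I_n -> R).

Definition dotv (x y : vec) : R := \sum_(i < n) x i * y i.
Definition norm2 (x : vec) : R := Num.sqrt (dotv x x).
Definition subv (x y : vec) : vec := fun i => x i - y i.
Definition zerov : vec := fun _ => 0.

Definition fobj (us u : vec) : R :=
  2^-1 * \sum_(i < n) \sum_(j < n) `| u i * u j - us i * us j |.

(* Frechet subgradient: liminf_{y -> x, y <> x}
   (f y - f x - <v, y - x>) / ||y - x|| >= 0,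
   the liminf written out as sup_{d>0} inf_{0<||y-x||<d}. *)
Definition frechet_subgrad (f : vec -> R) (x v : vec) : Prop :=
  (0 <= ereal_sup
     [set ereal_inf
        [set ((f y - f x - dotv v (subv y x)) / norm2 (subv y x))%:E
        | y in [set y | y != x /\ (norm2 (subv y x) < d)%R]]
     | d in [set d : R | (0 < d)%R]])%E.

(* Second subderivative d^2 f(x; v)(w) = liminf_{t \searrow 0, w' -> w}
   (f(x + t w') - f x - t <v, w'>) / (t^2 / 2), written as
   sup_{d>0} inf_{0<t<d, ||w'-w||<d}. Value in extended reals. *)
Definition second_subderiv (f : vec -> R) (x v w : vec) : \bar R :=
  ereal_sup
    [set ereal_inf
       [set ((f (fun i => x i + p.1 * p.2 i) - f x - p.1 * dotv v p.2)
               / (p.1 ^+ 2 / 2))%:E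
       | p in [set p : R * vec | 0 < p.1 < d /\ norm2 (subv p.2 w) < d]]
    | d in [set d : R | 0 < d]].

Definition second_order_stationary (f : vec -> R) (x : vec) : Prop :=
  frechet_subgrad f x zerov /\
  forall w : vec, (0 <= second_subderiv f x zerov w)%E.

Definition global_minimizer (f : vec -> R) (x : vec) : Prop :=
  forall y : vec, f x <= f y.
End Defs.

(* Main.v *)
Require Import Defs.
From mathcomp Require Import all_boot all_order all_algebra.
From mathcomp Require Import all_classical all_reals.
From mathcomp Require Import ereal ring lra.
Set Implicit Arguments. Unset Strict Implicit.
Import Order.TTheory GRing.Theory Num.Theory.
Local Open Scope ring_scope.


Section Aux.
Variable R : realType.

Lemma normC (x : R) : (`|x| = x /\ 0 <= x) \/ (`|x| = - x /\ x < 0).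
Proof. by case: (lerP 0 x) => h; [left; rewrite ger0_norm | right; rewrite ltr0_norm]. Qed.

Lemma thr_all (n : nat) (P : 'I_n -> R -> Prop) :
  (forall j, exists e : R, 0 < e /\ forall t, 0 < t -> t <= e -> P j t) ->
  exists e : R, 0 < e /\ forall t, 0 < t -> t <= e -> forall j, P j t.
Proof.
move=> H; have [f Hf] := boolp.choice H.
exists (\big[Num.min/1]_j f j); split.
  apply: (big_ind (fun x => 0 < x)) => //; last by move=> i _; case: (Hf i).
  by move=> x y hx hy; rewrite lt_min hx hy.
move=> t t0 te j; have [fj0 Hj] := Hf j; apply: Hj => //.
apply: (le_trans te); rewrite (bigD1 j) //= ge_min lexx //.
Qed.

End Aux.

Section Coord.
Variables (R : realType) (n : nat) (s u : 'I_n -> R).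

Definition Fs (v : 'I_n -> R) := \sum_i \sum_j `|v i * v j - s i * s j|.
Definition Am i j := u i * u j - s i * s j.
Definition Dk k h := \sum_(j | j != k) (`|Am k j + h * u j| - `|Am k j|)
   + 2^-1 * (`|(u k + h) * (u k + h) - s k * s k| - `|Am k k|).

Lemma coord_diff k h v : (forall i, v i = u i + (if i == k then h else 0)) ->
  Fs v - Fs u = 2 * (Dk k h).
Proof.
move=> Hv.
set g := fun i j => `|v i * v j - s i * s j| - `|Am i j|.
have -> : Fs v - Fs u = \sum_i \sum_j g i j.
  rewrite /Fs -sumrB; apply: eq_bigr => i _; rewrite -sumrB //.
have H0 : forall i j, i != k -> j != k -> g i j = 0.
  move=> i j hi hj; rewrite /g !Hv (negbTE hi) (negbTE hj) !addr0 /Am subrr //.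
have Hs : forall i j, g i j = g j i by move=> i j; rewrite /g /Am (mulrC (v i)) (mulrC (u i)) (mulrC (s i)).
rewrite (bigD1 k) //=.
have -> : \sum_(i | i != k) \sum_j g i j = \sum_(j | j != k) g k j.
  apply: eq_bigr => i hi; rewrite (bigD1 k) //= big1 ?addr0 //.
  by move=> j hj; apply: H0.
rewrite (bigD1 k) //= /Dk.
have -> : g k k = `|(u k + h) * (u k + h) - s k * s k| - `|Am k k|.
  by rewrite /g Hv eqxx.
have -> : \sum_(j | j != k) g k j = \sum_(j | j != k) (`|Am k j + h * u j| - `|Am k j|).
  apply: eq_bigr => j hj; rewrite /g !Hv eqxx (negbTE hj) addr0 /Am.
  congr (`| _ | - _); ring.
have h2 : (2 : R) * 2^-1 = 1 by rewrite mulfV // pnatr_eq0.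
rewrite -/(Dk k h) /Dk; set S := \sum_(j | j != k) _; set T := `|_| - _.
by rewrite mulrDr mulrA h2 mul1r; ring.
Qed.

Lemma fobj_diff k h v : (forall i, v i = u i + (if i == k then h else 0)) ->
  fobj s v - fobj s u = Dk k h.
Proof.
move=> Hv; rewrite /fobj -mulrBr.
have -> : \sum_i \sum_j `|v i * v j - s i * s j| - \sum_i \sum_j `|u i * u j - s i * s j| = Fs v - Fs u by [].
rewrite (coord_diff Hv) mulrA mulVf ?mul1r // pnatr_eq0 //.
Qed.

End Coord.


Section Final.
Variables (R : realType) (n : nat) (s u : 'I_n -> R).

Definition desc := exists k (sg c t0 : R), 0 < c /\ 0 < t0 /\
  forall t, 0 < t -> t < t0 -> Dk s u k (t * sg) <= - (c * (t * t)).

Lemma desc_contra : desc ->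
  ~ (forall w, (0 <= second_subderiv (fobj s) u (@zerov R n) w)%E).
Proof.
move=> [k [sg [c [t0 [c0 [t00 Hd]]]]]] H.
pose w := fun i : 'I_n => if i == k then sg else 0.
have := H w; apply/negP; rewrite -ltNge.
apply: (@le_lt_trans _ _ (- (c * 2))%:E); last by rewrite lte_fin; lra.
apply: ge_ereal_sup => y [d d0 <-].
pose t := Num.min d t0 / 2.
have mp : 0 < Num.min d t0 by rewrite lt_min d0 t00.
have tp : 0 < t by rewrite /t divr_gt0.
have td : t < d.
  by apply: (@lt_le_trans _ _ (Num.min d t0)); [rewrite /t; lra | rewrite ge_min lexx].
have tt0 : t < t0.
  by apply: (@lt_le_trans _ _ (Num.min d t0)); [rewrite /t; lra | rewrite ge_min lexx orbT].
apply: (@le_trans _ _ (((fobj s (fun i => u i + t * w i) - fobj s u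
          - t * dotv (@zerov R n) w) / (t ^+ 2 / 2))%:E)).
  apply: ereal_inf_lbound; exists (t, w) => //=; split; first by rewrite tp td.
  rewrite /norm2 /dotv /subv (eq_bigr (fun _ => 0)); last by move=> i _; rewrite subrr mul0r.
  by rewrite big1 // sqrtr0.
rewrite lee_fin.
have -> : dotv (@zerov R n) w = 0 by rewrite /dotv big1 // => i _; rewrite /zerov mul0r.
rewrite mulr0 subr0.
rewrite (@fobj_diff _ _ s u k (t * sg)); last first.
  by move=> i; rewrite /w; case: (i == k); rewrite ?mulr0.
have t2 : 0 < t ^+ 2 / 2 by rewrite divr_gt0 // exprn_gt0.
rewrite ler_pdivrMr //.
have := Hd t tp tt0; rewrite expr2; lra.
Qed.

End Final.


Section Scalar.
Variable R : realType.
Implicit Types (x t sg uk uj sk sj A P Q a b : R).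

Lemma t1 A x : A * x <= 0 -> `|x| <= `|A| -> `|A + x| = `|A| - `|x|.
Proof.
case: (normC A) => [[-> ?]|[-> ?]]; case: (normC x) => [[-> ?]|[-> ?]];
case: (normC (A + x)) => [[-> ?]|[-> ?]]; nra.
Qed.

Lemma toward x sg t : (sg = 1 \/ sg = -1) -> sg * x <= 0 -> 0 <= t -> t <= `|x| ->
  `|x + t * sg| = `|x| - t.
Proof.
move=> hs h t0 tx; case: (normC (x + t * sg)) => [[-> ?]|[-> ?]];
case: (normC x) => [[E ?]|[E ?]]; rewrite E in tx *; case: hs => E0; subst sg; lra.
Qed.

Lemma absB_opp P Q : P * Q <= 0 -> `|P - Q| = `|P| + `|Q|.
Proof.
case: (normC P) => [[-> ?]|[-> ?]]; case: (normC Q) => [[-> ?]|[-> ?]];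
case: (normC (P - Q)) => [[-> ?]|[-> ?]]; nra.
Qed.

Lemma sg_facts sg : (sg = 1 \/ sg = -1) -> sg * sg = 1 /\ `|sg| = 1.
Proof. by case=> ->; rewrite ?mulrNN ?normrN mulr1 normr1. Qed.

Lemma term_opp uk uj sk sj sg t : (sg = 1 \/ sg = -1) -> sg * uk <= 0 ->
  0 <= t -> t <= `|uk| -> uk * sk * (uj * sj) <= 0 ->
  `|uk * uj - sk * sj + t * sg * uj| - `|uk * uj - sk * sj| = - (t * `|uj|).
Proof.
move=> hs hsu t0 tu hp.
have [ss ns] := sg_facts hs.
have hx : `|t * sg * uj| = t * `|uj| by rewrite !normrM ns mulr1 ger0_norm.
have hPQ : (uk * uj) * (sk * sj) <= 0 by rewrite mulrA -(mulrA uk) (mulrC uj) mulrA -mulrA.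
have hPx : (uk * uj) * (t * sg * uj) <= 0.
  have -> : (uk * uj) * (t * sg * uj) = t * (sg * uk) * (uj * uj) by ring.
  have h1 : t * (sg * uk) <= 0 by nra.
  have h2 : 0 <= uj * uj by nra.
  nra.
have hQx : 0 <= (sk * sj) * (t * sg * uj).
  case: (eqVneq uk 0) => [uk0|ukn0].
    move: tu; rewrite uk0 normr0 => tu.
    have t0' : t = 0 by lra.
    by rewrite t0' !mul0r mulr0.
  have sgn : sg * uk < 0 by rewrite lt_neqAle hsu andbT mulf_neq0 // ; case: hs => ->; rewrite ?oppr_eq0 oner_eq0.
  have e : (sk * sj) * (t * sg * uj) * (sg * uk) = t * (uk * sk * (uj * sj)) * (sg * sg) by ring.
  have : (sk * sj) * (t * sg * uj) * (sg * uk) <= 0 by rewrite e ss mulr1 mulr_ge0_le0.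
  move=> h; nra.
rewrite t1.
- by rewrite hx; ring.
- rewrite mulrBl; lra.
- rewrite hx absB_opp //.
  have h1 : t * `|uj| <= `|uk * uj| by rewrite normrM; apply: ler_wpM2r.
  have h2 := normr_ge0 (sk * sj); lra.
Qed.

Lemma term_tri A x : `|A + x| - `|A| <= `|x|.
Proof. have := ler_normD A x; lra. Qed.

Lemma sqr_norm x : x * x = `|x| * `|x|.
Proof. by case: (normC x) => [[-> _]|[-> _]]; rewrite ?mulrNN. Qed.

Lemma diag_ar a b t : 0 <= a -> 0 <= b -> 0 <= t -> t <= a ->
  `|(a - t) * (a - t) - b * b| - `|a * a - b * b| <= 2 * (t * a) - t * t.
Proof.
move=> a0 b0 t0 ta.
have h2 : 0 <= t * (2 * a - t) by apply: mulr_ge0; lra.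
have h1 : (a - t) * (a - t) <= a * a by nra.
case: (normC ((a - t) * (a - t) - b * b)) => [[-> ?]|[-> ?]];
case: (normC (a * a - b * b)) => [[-> ?]|[-> ?]]; nra.
Qed.

Lemma diag_toward uk sk sg t : (sg = 1 \/ sg = -1) -> sg * uk <= 0 -> 0 <= t -> t <= `|uk| ->
  `|(uk + t * sg) * (uk + t * sg) - sk * sk| - `|uk * uk - sk * sk| <= 2 * (t * `|uk|) - t * t.
Proof.
move=> hs hsu t0 tu.
rewrite (sqr_norm (uk + _)) toward // (sqr_norm uk) (sqr_norm sk).
by apply: diag_ar.
Qed.

End Scalar.

Section Cases.
Variables (R : realType) (n : nat) (s u : 'I_n -> R).

Lemma caseC1 k : s k = 0 -> u k != 0 -> desc s u.
Proof.
move=> sk0 uk0.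
pose sg : R := if 0 < u k then -1 else 1.
have hs : sg = 1 \/ sg = -1 by rewrite /sg; case: ifP; [right | left].
have hsu : sg * u k <= 0.
  rewrite /sg; case: ifP => h; first by rewrite mulN1r oppr_le0 ltW.
  by rewrite mul1r leNgt h.
exists k, sg, 2^-1, `|u k|; split => //; split; first by rewrite normr_gt0.
move=> t t0 tu.
have t0' := ltW t0; have tu' := ltW tu.
rewrite /Dk.
have hsum : \sum_(j | j != k) (`|Am s u k j + t * sg * u j| - `|Am s u k j|) <= 0.
  apply: sumr_le0 => j _; rewrite /Am sk0 !mul0r !subr0 -mulrDl !normrM toward //.
  have := normr_ge0 (u j); nra.
have hd : `|(u k + t * sg) * (u k + t * sg) - s k * s k| - `|Am s u k k| = 
   (`|u k| - t) * (`|u k| - t) - `|u k| * `|u k|.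
  by rewrite /Am sk0 !mul0r !subr0 !normrM toward.
rewrite hd; nra.
Qed.

Definition same k j : bool := 0 < u k * s k * (u j * s j).
Definition Wsame k := \sum_(j | same k j) `|u j|.
Definition Woth k := \sum_(j | ~~ same k j) `|u j|.

Lemma caseC3 k : u k * s k != 0 -> Wsame k <= Woth k -> desc s u.
Proof.
move=> uks hW.
have uk0 : u k != 0 by move: uks; apply: contraNneq => ->; rewrite mul0r.
pose sg : R := if 0 < u k then -1 else 1.
have hs : sg = 1 \/ sg = -1 by rewrite /sg; case: ifP; [right | left].
have hsu : sg * u k <= 0.
  rewrite /sg; case: ifP => h; first by rewrite mulN1r oppr_le0 ltW.
  by rewrite mul1r leNgt h.
have [ss ns] := sg_facts hs.
exists k, sg, 2^-1, `|u k|; split => //; split; first by rewrite normr_gt0.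
move=> t t0 tu.
have t0' := ltW t0; have tu' := ltW tu.
pose g j := if same k j then `|u j| else - `|u j|.
have hsum : \sum_(j | j != k) (`|Am s u k j + t * sg * u j| - `|Am s u k j|)
    <= \sum_(j | j != k) t * g j.
  apply: ler_sum => j _; rewrite /g; case: ifP => hj.
    by apply: (le_trans (term_tri _ _)); rewrite !normrM ns mulr1 ger0_norm.
  rewrite /Am term_opp //; first by rewrite mulrN.
  by rewrite leNgt; move: hj; rewrite /same => ->.
have gk : g k = `|u k|.
  rewrite /g /same ifT // lt0r mulf_neq0 //=; nra.
have hg : \sum_j g j = Wsame k - Woth k.
  rewrite /Wsame /Woth [X in _ = X - _]big_mkcond [X in _ = _ - X]big_mkcond -sumrB.
  by apply: eq_bigr => j _; rewrite /g; case: ifP => _ /=; rewrite ?subr0 ?sub0r.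
have hg2 : \sum_(j | j != k) t * g j = t * (Wsame k - Woth k - `|u k|).
  by rewrite -mulr_sumr -hg [in RHS](bigD1 k) //= gk; congr (_ * _); ring.
have hd := diag_toward (s k) hs hsu t0' tu'.
rewrite /Dk; move: hsum; rewrite hg2 => hsum.
have : t * (Wsame k - Woth k - `|u k|) <= - (t * `|u k|).
  have : Wsame k - Woth k - `|u k| <= - `|u k| by lra.
  by move=> h; rewrite -mulrN; apply: ler_wpM2l.
move: hd; rewrite /Am => hd h1; lra.
Qed.

End Cases.


Section Scalar4.
Variable R : realType.
Implicit Types (x t uk uj sk sj A : R).

Lemma term_dec A x : 0 <= x -> x <= A -> `|A - x| - `|A| = - x.
Proof. move=> x0 xA; rewrite !ger0_norm; lra. Qed.

Lemma term_inc A x : 0 <= x -> x <= - A -> `|A + x| - `|A| = - x.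
Proof. move=> x0 xA; rewrite !ler0_norm; lra. Qed.

Lemma diag_down uk sk t : 0 <= sk -> sk < uk -> 0 <= t -> t <= uk - sk ->
  `|(uk + t * -1) * (uk + t * -1) - sk * sk| - `|uk * uk - sk * sk| = - (2 * (t * uk)) + t * t.
Proof.
move=> s0 su t0 tu.
have h1 : 0 <= (uk - t) * (uk - t) - sk * sk by nra.
have h2 : 0 <= uk * uk - sk * sk by nra.
rewrite mulrN1 (ger0_norm h2) ger0_norm; first ring.
by rewrite -[uk + - t]/(uk - t).
Qed.

Lemma diag_up uk sk t : 0 <= uk -> uk < sk -> 0 <= t -> t <= sk - uk ->
  `|(uk + t * 1) * (uk + t * 1) - sk * sk| - `|uk * uk - sk * sk| = - (2 * (t * uk)) - t * t.
Proof.
move=> s0 su t0 tu.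
have h1 : (uk + t) * (uk + t) - sk * sk <= 0 by nra.
have h2 : uk * uk - sk * sk <= 0 by nra.
rewrite mulr1 (ler0_norm h2) ler0_norm //; ring.
Qed.

End Scalar4.

Section Cases4.
Variables (R : realType) (n : nat) (s u : 'I_n -> R).

Lemma min3 (e a b t : R) : t < Num.min e (Num.min a b) -> [/\ t <= e, t <= a & t <= b].
Proof.
rewrite !lt_min => /andP[h1 /andP[h2 h3]]; split; exact: ltW.
Qed.

Lemma caseDown k : (forall j, 0 <= u j) -> (forall j, 0 <= s j) -> s k < u k ->
  \sum_j (if s k * s j < u k * u j then -1 else 1) * u j < 0 -> desc s u.
Proof.
move=> u0 s0 sku.
set ed := fun j => if s k * s j < u k * u j then -1 else 1 : R.
set L := \sum_j ed j * u j => Ld.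
have [e [e0 He]] : exists e : R, 0 < e /\ forall t, 0 < t -> t <= e -> forall j,
    `|Am s u k j + t * -1 * u j| - `|Am s u k j| <= t * (ed j * u j).
  apply: thr_all => j; rewrite /ed; case: ifP => hj.
    exists ((u k * u j - s k * s j) / (u j + 1)); split.
      by rewrite divr_gt0 // ?subr_gt0 //; have := u0 j; lra.
    move=> t t0 te.
    have h1 : t * u j <= u k * u j - s k * s j.
      have uj0 := u0 j.
      have : t * (u j + 1) <= u k * u j - s k * s j.
        by rewrite -ler_pdivlMr //; lra.
      nra.
    rewrite /Am mulrN1 !mulNr mul1r mulrN term_dec //.
    by apply: mulr_ge0; [exact: ltW | exact: u0].
  exists 1; split => // t t0 te.
  apply: (le_trans (term_tri _ _)); rewrite mul1r !normrM normrN1 mulr1.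
  by rewrite !ger0_norm //; [exact: ltW].
exists k, (-1), 2^-1, (Num.min e (Num.min (u k - s k) (- L))); split => //; split.
  by rewrite !lt_min e0 subr_gt0 sku oppr_gt0 Ld.
move=> t t0 /min3[te tk tL].
have hsum : \sum_(j | j != k) (`|Am s u k j + t * -1 * u j| - `|Am s u k j|)
   <= t * (L + u k).
  apply: (le_trans (ler_sum _ (fun j _ => He t t0 te j))).
  rewrite -mulr_sumr; apply: ler_wpM2l; first exact: ltW.
  rewrite /L [X in _ <= X + _](bigD1 k) //=.
  have -> : ed k = -1 by rewrite /ed ifT //; have := s0 k; nra.
  lra.
have hd := diag_down (s0 k) sku (ltW t0) tk.
rewrite /Dk; move: hd; rewrite /Am => hd.
have htL : t * L <= - (t * t) by nra.
move: hsum; rewrite /Am => hsum.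
rewrite hd; nra.
Qed.

Lemma caseUp k : (forall j, 0 <= u j) -> (forall j, 0 <= s j) -> u k < s k ->
  \sum_j (if u k * u j < s k * s j then -1 else 1) * u j <= 0 -> desc s u.
Proof.
move=> u0 s0 sku.
set ed := fun j => if u k * u j < s k * s j then -1 else 1 : R.
set L := \sum_j ed j * u j => Ld.
have [e [e0 He]] : exists e : R, 0 < e /\ forall t, 0 < t -> t <= e -> forall j,
    `|Am s u k j + t * 1 * u j| - `|Am s u k j| <= t * (ed j * u j).
  apply: thr_all => j; rewrite /ed; case: ifP => hj.
    exists ((s k * s j - u k * u j) / (u j + 1)); split.
      by rewrite divr_gt0 // ?subr_gt0 //; have := u0 j; lra.
    move=> t t0 te.
    have h1 : t * u j <= s k * s j - u k * u j.
      have uj0 := u0 j.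
      have : t * (u j + 1) <= s k * s j - u k * u j.
        by rewrite -ler_pdivlMr //; lra.
      nra.
    rewrite /Am mulr1 term_inc //; first lra.
      by apply: mulr_ge0; [exact: ltW | exact: u0].
    lra.
  exists 1; split => // t t0 te.
  apply: (le_trans (term_tri _ _)); rewrite mul1r !normrM normr1 mulr1.
  by rewrite !ger0_norm //; [exact: ltW].
exists k, 1, 2^-1, (Num.min e (Num.min (s k - u k) 1)); split => //; split.
  by rewrite !lt_min e0 subr_gt0 sku ltr01.
move=> t t0 /min3[te tk _].
have hsum : \sum_(j | j != k) (`|Am s u k j + t * 1 * u j| - `|Am s u k j|)
   <= t * (L + u k).
  apply: (le_trans (ler_sum _ (fun j _ => He t t0 te j))).
  rewrite -mulr_sumr; apply: ler_wpM2l; first exact: ltW.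
  rewrite /L [X in _ <= X + _](bigD1 k) //=.
  have -> : ed k = -1 by rewrite /ed ifT //; have := u0 k; nra.
  lra.
have hd := diag_up (u0 k) sku (ltW t0) tk.
rewrite /Dk; move: hd; rewrite /Am => hd.
have htL : t * L <= 0 by nra.
move: hsum; rewrite /Am => hsum.
rewrite hd; nra.
Qed.

Lemma Fs_zero : (forall j, u j = s j) -> Fs s u = 0.
Proof.
move=> h; rewrite /Fs big1 // => i _; rewrite big1 // => j _.
by rewrite !h subrr normr0.
Qed.

Lemma caseC4 : (forall j, 0 <= u j) -> (forall j, 0 <= s j) ->
  (forall j, s j = 0 -> u j = 0) -> 0 < Fs s u -> desc s u.
Proof.
move=> u0 s0 H1 Fp.
have [j0 sj0] : exists j0, s j0 != 0.
  case: (boolp.pselect (exists j0, s j0 != 0)) => // hn; exfalso.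
  have hz : forall j, u j = s j.
    move=> j; have sj : s j = 0.
      by apply/eqP; apply/negPn/negP => h; apply: hn; exists j.
    by rewrite sj H1.
  by move: Fp; rewrite Fs_zero // ltxx.
have spos : forall j, s j != 0 -> 0 < s j by move=> j h; rewrite lt0r h s0.
have upos : forall j, u j != 0 -> 0 < s j.
  move=> j h; apply: spos; apply: contra_neq h; exact: H1.
pose rho j := u j / s j.
have rhoE : forall j, s j != 0 -> u j = rho j * s j by move=> j h; rewrite /rho divfK.
case: (@arg_maxP _ _ _ j0 (fun j => s j != 0) rho sj0) => kM sMn HM.
case: (@arg_minP _ _ _ j0 (fun j => s j != 0) rho sj0) => km smn Hm.
have sM := spos _ sMn; have sm := spos _ smn.
have mono : forall a b x y : R, a <= b -> 0 <= x -> 0 <= y -> a * x * y <= b * y * x.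
  move=> a b x y ab x0 y0; have : 0 <= (b - a) * (x * y) by apply: mulr_ge0 => //; [lra | apply: mulr_ge0].
  move=> h; have e : (b - a) * (x * y) = b * y * x - a * x * y by ring.
  lra.
have hM : forall j, u j * s kM <= u kM * s j.
  move=> j; case: (eqVneq (s j) 0) => [sj|sj]; first by rewrite sj (H1 j sj) mul0r mulr0.
  have := HM j sj; have sjp := spos _ sj.
  rewrite (rhoE j sj) (rhoE kM sMn) => hr; apply: mono => //; exact: ltW.
have hm : forall j, u km * s j <= u j * s km.
  move=> j; case: (eqVneq (s j) 0) => [sj|sj]; first by rewrite sj (H1 j sj) mul0r mulr0.
  have := Hm j sj; have sjp := spos _ sj.
  rewrite (rhoE j sj) (rhoE km smn) => hr; apply: mono => //; exact: ltW.
have ucase : forall j, u j = 0 \/ (0 < u j /\ 0 < s j).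
  move=> j; case: (eqVneq (u j) 0) => [->|h]; [by left | right].
  by split; [rewrite lt0r h u0 | exact: upos].
set Lu := \sum_j (if u km * u j < s km * s j then -1 else 1) * u j.
set Ld := \sum_j (if s kM * s j < u kM * u j then -1 else 1) * u j.
have sumneg : forall (e : 'I_n -> R), (forall j, e j * u j <= - u j) ->
    \sum_j e j * u j <= - u kM.
  move=> e he; apply: (le_trans (ler_sum _ (fun j _ => he j))).
  rewrite sumrN lerN2 (bigD1 kM) //= lerDl; apply: sumr_ge0 => j _; exact: u0.
case: (ltP (u km) (s km)) => hkm.
  case: (lerP Lu 0) => hLu; first exact: (caseUp u0 s0 hkm hLu).
  have uMs : s kM < u kM.
    rewrite ltNge; apply/negP => h.
    have : Lu <= - u kM.
      apply: sumneg => j; case: (ucase j) => [->|[uj sj]]; first by rewrite !mulr0 oppr0.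
      have h1 := hM j; have h2 := s0 kM.
      have ujs : u j <= s j by nra.
      rewrite ifT; first by rewrite mulN1r.
      have := u0 km; nra.
    have := u0 kM; lra.
  have hsum : Ld + Lu <= 0.
    rewrite /Ld /Lu -big_split /=; apply: sumr_le0 => j _.
    case: (ucase j) => [->|[uj sj]]; first by rewrite !mulr0 addr0.
    case: ifP => h1; case: ifP => h2; try lra.
    exfalso; move/negbT: h1; move/negbT: h2; rewrite -!leNgt => h2 h1.
    have a1 : u kM * u j * s km <= s kM * s j * s km by nra.
    have a2 : s km * s j * s kM <= u km * u j * s kM by nra.
    have a3 : u kM * s km <= u km * s kM by nra.
    nra.
  have hLd : Ld < 0 by lra.
  exact: (caseDown u0 s0 uMs hLd).
case: (ltP (s kM) (u kM)) => hkM.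
  have : Ld <= - u kM.
    apply: sumneg => j; case: (ucase j) => [->|[uj sj]]; first by rewrite !mulr0 oppr0.
    have h1 := hm j; have h2 := u0 km.
    have ujs : s j <= u j by nra.
    rewrite ifT; first by rewrite mulN1r.
    nra.
  move=> h; have hLd : Ld < 0 by have := s0 kM; lra.
  exact: (caseDown u0 s0 hkM hLd).
exfalso.
have : Fs s u = 0.
  apply: Fs_zero => j; case: (ucase j) => [uj|[uj sj]].
    rewrite uj; have := hm j; rewrite uj mul0r => h.
    have := s0 j; have := s0 km => a b.
    have c : s j <= 0 by nra.
    lra.
  have h1 := hM j; have h2 := hm j.
  have a : u j <= s j by nra.
  have b : s j <= u j by nra.
  lra.
by move=> h; move: Fp; rewrite h ltxx.
Qed.

End Cases4.


Section Transport.
Variables (R : realType) (n : nat) (s u d e : 'I_n -> R).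
Hypothesis hd : forall i, d i * d i = 1.
Hypothesis hde : forall i j, d i * d j = e i * e j.
Let u' := fun j => d j * u j.
Let s' := fun j => e j * s j.

Lemma norm_pm (x : R) : x * x = 1 -> `|x| = 1.
Proof.
move=> h; have h1 : `|x| * `|x| = 1 by rewrite -normrM h normr1.
have h0 := normr_ge0 x; nra.
Qed.

Lemma Am_tr k j : Am s' u' k j = d k * d j * Am s u k j.
Proof.
rewrite /Am /u' /s'.
have -> : e k * s k * (e j * s j) = (e k * e j) * (s k * s j) by ring.
rewrite -hde; ring.
Qed.

Lemma Fs_tr : Fs s' u' = Fs s u.
Proof.
apply: eq_bigr => i _; apply: eq_bigr => j _.
have := Am_tr i j; rewrite /Am => ->.
by rewrite !normrM !(norm_pm (hd _)) !mul1r.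
Qed.

Lemma Dk_tr k h : Dk s' u' k (d k * h) = Dk s u k h.
Proof.
rewrite /Dk; congr (_ + _).
  apply: eq_bigr => j _; rewrite !Am_tr.
  have -> : d k * d j * Am s u k j + d k * h * u' j = d k * d j * (Am s u k j + h * u j).
    by rewrite /u'; ring.
  by rewrite !normrM !(norm_pm (hd _)) !mul1r.
rewrite Am_tr !normrM !(norm_pm (hd _)) !mul1r.
congr (_ * (`| _ | - _)).
rewrite /u' /s'.
have -> : e k * s k * (e k * s k) = (e k * e k) * (s k * s k) by ring.
rewrite -hde hd.
have -> : (d k * u k + d k * h) * (d k * u k + d k * h) = (d k * d k) * ((u k + h) * (u k + h)) by ring.
by rewrite hd !mul1r.
Qed.

Lemma desc_tr : desc s' u' -> desc s u.
Proof.
move=> [k [sg [c [t0 [c0 [t00 H]]]]]].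
exists k, (d k * sg), c, t0; split => //; split => // t tp tt.
have := H t tp tt.
have -> : t * sg = d k * (t * (d k * sg)) by rewrite mulrCA [d k * (d k * sg)]mulrA hd mul1r.
by rewrite Dk_tr.
Qed.

End Transport.

Section Main.
Variables (R : realType) (n : nat) (s u : 'I_n -> R).

Lemma caseC4' : (forall j, s j = 0 -> u j = 0) ->
  (forall i j, 0 <= u i * s i * (u j * s j)) -> 0 < Fs s u -> desc s u.
Proof.
move=> H1 H3 Fp.
have [eps [epsE hep]] : exists eps : R, eps * eps = 1 /\ forall j, 0 <= eps * (u j * s j).
  case: (boolp.pselect (exists i, 0 < u i * s i)) => [[i hi]|hn].
    exists 1; split; first by rewrite mulr1.
    move=> j; rewrite mul1r; have := H3 i j; nra.
  exists (-1); split; first by rewrite mulrNN mulr1.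
  move=> j; rewrite mulN1r oppr_ge0 leNgt; apply/negP => h; apply: hn; by exists j.
pose e := fun j => if s j < 0 then -1 else 1 : R.
pose d := fun j => eps * e j.
have he : forall j, e j * e j = 1 by move=> j; rewrite /e; case: ifP; rewrite ?mulrNN mulr1.
have hd : forall j, d j * d j = 1.
  by move=> j; rewrite /d mulrACA epsE he mul1r.
have hde : forall i j, d i * d j = e i * e j.
  by move=> i j; rewrite /d mulrACA epsE mul1r.
apply: (@desc_tr R n s u d e hd hde).
apply: caseC4.
- move=> j; rewrite /d /e; case: ifP => hs.
    have := hep j; nra.
  case: (eqVneq (s j) 0) => [sj|sj]; first by rewrite (H1 j sj) !mulr0.
  have sp : 0 < s j by rewrite lt0r sj leNgt hs.
  have := hep j; nra.
- by move=> j; rewrite /e; case: ifP => hs; nra.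
- move=> j; rewrite /e; case: ifP => hs; rewrite ?mulN1r ?mul1r.
    by move/eqP; rewrite oppr_eq0 => /eqP sj; rewrite (H1 j sj) mulr0.
  by move=> sj; rewrite (H1 j sj) mulr0.
- by rewrite (@Fs_tr R n s u d e hd hde).
Qed.

Lemma descent : 0 < Fs s u -> desc s u.
Proof.
move=> Fp.
case: (boolp.pselect (exists k, s k = 0 /\ u k != 0)) => [[k [sk uk]]|hn1].
  exact: (caseC1 sk uk).
have H1 : forall j, s j = 0 -> u j = 0.
  move=> j sj; apply/eqP; apply/negPn/negP => h; apply: hn1; by exists j.
case: (boolp.pselect (exists k, u k * s k != 0 /\ Wsame s u k <= Woth s u k)) => [[k [h1 h2]]|hn3].
  exact: (caseC3 h1 h2).
have Hn : forall k, u k * s k != 0 -> Woth s u k < Wsame s u k.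
  move=> k h; rewrite ltNge; apply/negP => h2; apply: hn3; by exists k.
apply: caseC4' => // i j.
rewrite leNgt; apply/negP => hneg.
have hi : u i * s i != 0 by apply/eqP => h; move: hneg; rewrite h mul0r ltxx.
have hj : u j * s j != 0 by apply/eqP => h; move: hneg; rewrite h mulr0 ltxx.
have sub : forall a b, u a * s a * (u b * s b) < 0 -> Wsame s u b <= Woth s u a.
  move=> a b hab; rewrite /Wsame /Woth [X in X <= _]big_mkcond [X in _ <= X]big_mkcond /=; apply: ler_sum => l _.
  rewrite /same; case: ifP => h1; case: ifP => h2 //=.
  exfalso; move/negbFE: h2 => h2.
  have h3 : 0 < (u b * s b * (u l * s l)) * (u a * s a * (u l * s l)) by apply: mulr_gt0.
  have e : (u b * s b * (u l * s l)) * (u a * s a * (u l * s l)) = 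
    (u a * s a * (u b * s b)) * ((u l * s l) * (u l * s l)) by ring.
  have h4 : 0 <= (u l * s l) * (u l * s l) by nra.
  have h5 : (u a * s a * (u b * s b)) * ((u l * s l) * (u l * s l)) <= 0.
    by apply: mulr_le0_ge0 => //; exact: ltW.
  lra.
have := sub i j hneg.
have hneg' : u j * s j * (u i * s i) < 0 by rewrite mulrC.
have := sub j i hneg'.
have := Hn i hi; have := Hn j hj.
lra.
Qed.

End Main.

Unset Implicit Arguments.
Close Scope ring_scope.

Theorem corollary2 (R : realType) (n : nat) (us u : 'I_n -> R) :
  second_order_stationary (fobj us) u -> global_minimizer (fobj us) u.
Proof.
move=> [_ H2] y.
have fy : (0 <= fobj us y)%R.
  rewrite /fobj; apply: mulr_ge0; first by rewrite invr_ge0.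
  by apply: sumr_ge0 => i _; apply: sumr_ge0 => j _.
suff fu : (fobj us u <= 0)%R by apply: le_trans fy.
rewrite leNgt; apply/negP => fp.
have Fp : (0 < Fs us u)%R.
  by move: fp; rewrite /fobj pmulr_rgt0 // invr_gt0.
exact: (desc_contra (descent Fp) H2).
Qed.
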